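(* Let $\tilde X=J_n^*XJ_n\in S_{n+1}$ with $X\in M_n$ real or complex (of arbitrary rank), and let $k_n$ be any invertible $n\times n$ matrix with $K_n=k_nk_n^*$ (e.g. the Cholesky factor). Then the Moore–Penrose inverse of $\tilde X$ lies in $S_{n+1}$ and equals $\phi(X^\oplus)=J_n^*X^\oplus J_n$, where $X^\oplus:=(k_n^{-1})^*(k_n^*Xk_n)^+k_n^{-1}$ is the $\circ$-Moore–Penrose inverse of $X$; that is, \[\tilde X^+=J_n^*(k_n^{-1})^*(k_n^*Xk_n)^+k_n^{-1}J_n,\] and also \[\tilde X^+=J_n^*\Big(\lim_{\delta\downarrow0}(X^*K_nXK_n+\delta I_n)^{-1}X^*\Big)J_n,\] where the limit is over real $\delta>0$.
   Context: Matrices are over $\mathbb R$ or $\mathbb C$; $A^*$ denotes conjugate transpose and $A^+$ the Moore–Penrose inverse (the unique $B$ with $ABA=A$, $BAB=B$, $(AB)^*=AB$, $(BA)^*=BA$). $M_n$ is the set of $n\times n$ matrices; $S_{n}$ is the set of $n\times n$ matrices all of whose row sums and column sums are zero. $\mathbf 1$ is the all-ones column vector, $J_n:=[I_n\mid -\mathbf 1]$ (an $n\times(n+1)$ matrix), $K_n:=J_nJ_n^*=I_n+\mathbf 1\mathbf 1^*$ (symmetric positive definite), $\phi(X):=J_n^*XJ_n$. On $M_n$, $X\circ Y:=XK_nY$, and a $\circ$-Moore–Penrose inverse of $X$ is a $Y\in M_n$ with $X\circ Y\circ X=X$, $Y\circ X\circ Y=Y$, $(X\circ Y)^*=X\circ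 Y$, $(Y\circ X)^*=Y\circ X$. *)

(* Defs.v *)
(* Scalars: any numClosedFieldType C (e.g. algC), which
   covers complex matrices, and real matrices as those with real entries. *)
From HB Require Import structures.
From mathcomp Require Import all_boot all_order all_algebra.
Set Implicit Arguments. Unset Strict Implicit. Unset Printing Implicit Defensive.
Import Order.TTheory GRing.Theory Num.Theory.
Local Open Scope ring_scope.

Definition ctmx (C : numClosedFieldType) m n (A : 'M[C]_(m, n)) : 'M[C]_(n, m) :=
  (map_mx Num.conj A)^T.

Definition is_MP (C : numClosedFieldType) m n (A : 'M[C]_(m, n)) (B : 'M[C]_(n, m)) :=
  [/\ A *m B *m A = A, B *m A *m B = B,
      ctmx (A *m B) = A *m B & ctmx (B *m A) = B *m A].

Definition in_S (C : numClosedFieldType) n (A : 'M[C]_n) :=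
  (forall i, \sum_j A i j = 0) /\ (forall j, \sum_i A i j = 0).

Definition Jn (C : numClosedFieldType) n : 'M[C]_(n, n + 1) :=
  row_mx 1%:M (- const_mx 1).

Definition Kn (C : numClosedFieldType) n : 'M[C]_n := Jn C n *m ctmx (Jn C n).

Definition phi (C : numClosedFieldType) n (X : 'M[C]_n) : 'M[C]_(n + 1) :=
  ctmx (Jn C n) *m X *m Jn C n.

Definition circ (C : numClosedFieldType) n (X Y : 'M[C]_n) : 'M[C]_n :=
  X *m Kn C n *m Y.

Definition is_circMP (C : numClosedFieldType) n (X Y : 'M[C]_n) :=
  [/\ circ (circ X Y) X = X, circ (circ Y X) Y = Y,
      ctmx (circ X Y) = circ X Y & ctmx (circ Y X) = circ Y X].

(* entrywise limit of f(delta) as real delta decreases to 0 *)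
Definition mx_lim0 (C : numClosedFieldType) m p (f : C -> 'M[C]_(m, p)) (L : 'M[C]_(m, p)) :=
  forall eps : C, 0 < eps -> exists2 d : C, 0 < d &
    forall delta : C, 0 < delta -> delta < d ->
      forall i j, `|f delta i j - L i j| < eps.

(* Main.v *)
Require Import Defs.
From HB Require Import structures.
From mathcomp Require Import all_boot all_order all_algebra.
Set Implicit Arguments. Unset Strict Implicit. Unset Printing Implicit Defensive.
Import Order.TTheory GRing.Theory Num.Theory.
Local Open Scope ring_scope.

Lemma ctmxE (C : numClosedFieldType) m n (A : 'M[C]_(m, n)) i j :
  ctmx A i j = (A j i)^*.
Proof. by rewrite /ctmx !mxE. Qed.

Lemma ctmxM (C : numClosedFieldType) m n p (A : 'M[C]_(m, n)) (B : 'M[C]_(n, p)) :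
  ctmx (A *m B) = ctmx B *m ctmx A.
Proof.
apply/matrixP=> i j; rewrite ctmxE !mxE rmorph_sum; apply: eq_bigr => l _.
by rewrite !ctmxE rmorphM mulrC.
Qed.

Lemma ctmxK (C : numClosedFieldType) m n (A : 'M[C]_(m, n)) : ctmx (ctmx A) = A.
Proof. by apply/matrixP=> i j; rewrite !ctmxE conjCK. Qed.

Lemma ctmxD (C : numClosedFieldType) m n (A B : 'M[C]_(m, n)) :
  ctmx (A + B) = ctmx A + ctmx B.
Proof. by apply/matrixP=> i j; rewrite /ctmx !mxE rmorphD. Qed.

Lemma ctmxN (C : numClosedFieldType) m n (A : 'M[C]_(m, n)) :
  ctmx (- A) = - ctmx A.
Proof. by apply/matrixP=> i j; rewrite /ctmx !mxE rmorphN. Qed.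

Lemma ctmx_scalar (C : numClosedFieldType) n (c : C) :
  ctmx (c%:M : 'M_n) = (c^*)%:M.
Proof.
apply/matrixP=> i j; rewrite !ctmxE !mxE eq_sym.
by case: (i == j); rewrite ?rmorph0 // mulr1n.
Qed.

Lemma ctmx1 (C : numClosedFieldType) n : ctmx (1%:M : 'M[C]_n) = 1%:M.
Proof. by rewrite ctmx_scalar rmorph1. Qed.

Lemma ctmx0 (C : numClosedFieldType) m n : ctmx (0 : 'M[C]_(m,n)) = 0.
Proof. by apply/matrixP=> i j; rewrite /ctmx !mxE rmorph0. Qed.

Lemma asc2 (R : comNzRingType) a b c d (P : 'M[R]_(a, b)) (Q : 'M[R]_(b, c)) (S : 'M[R]_(a,c))
  (h : P *m Q = S) (A : 'M[R]_(d, a)) : A *m P *m Q = A *m S.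
Proof. by rewrite -h mulmxA. Qed.

Lemma asc3 (R : comNzRingType) a b c e d (P : 'M[R]_(a, b)) (Q : 'M[R]_(b, c))
  (T : 'M[R]_(c, e)) (S : 'M[R]_(a,e))
  (h : P *m Q *m T = S) (A : 'M[R]_(d, a)) : A *m P *m Q *m T = A *m S.
Proof. by rewrite -h !mulmxA. Qed.

Lemma phiM (C : numClosedFieldType) n (A B : 'M[C]_n) :
  phi A *m phi B = phi (circ A B).
Proof. by rewrite /phi /circ /Kn !mulmxA. Qed.

Lemma ctmx_phi (C : numClosedFieldType) n (A : 'M[C]_n) :
  ctmx (phi A) = phi (ctmx A).
Proof. by rewrite /phi !ctmxM ctmxK !mulmxA. Qed.

Lemma circMP_MP (C : numClosedFieldType) n (X Z : 'M[C]_n) :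
  is_circMP X Z -> is_MP (phi X) (phi Z).
Proof.
case=> h1 h2 h3 h4; split; rewrite ?phiM ?h1 ?h2 //.
  by rewrite ctmx_phi h3.
by rewrite ctmx_phi h4.
Qed.

Lemma Jn_one (C : numClosedFieldType) n : Jn C n *m (const_mx 1 : 'cV_(n+1)) = 0.
Proof.
rewrite /Jn -(col_mx_const n 1 1 (1 : C)) mul_row_col mul1mx mulNmx.
apply/matrixP=> i j; rewrite !mxE big_ord1 !mxE mulr1 subrr //.
Qed.

Lemma rowsumE (C : numClosedFieldType) m n (A : 'M[C]_(m, n)) i :
  \sum_j A i j = (A *m (const_mx 1 : 'cV_n)) i 0.
Proof. by rewrite !mxE; apply: eq_bigr => j _; rewrite mxE mulr1. Qed.

Lemma colsumE (C : numClosedFieldType) m n (A : 'M[C]_(m, n)) j :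
  \sum_i A i j = ((const_mx 1 : 'rV_m) *m A) 0 j.
Proof. by rewrite !mxE; apply: eq_bigr => i _; rewrite mxE mul1r. Qed.

Lemma ctmx_const1 (C : numClosedFieldType) m n : ctmx (const_mx 1 : 'M[C]_(m, n)) = const_mx 1.
Proof. by apply/matrixP=> i j; rewrite ctmxE !mxE rmorph1. Qed.

Lemma in_S_phi (C : numClosedFieldType) n (Z : 'M[C]_n) : in_S (phi Z).
Proof.
split.
  by move=> i; rewrite rowsumE /phi -mulmxA Jn_one mulmx0 mxE.
move=> j; rewrite colsumE /phi !mulmxA.
have -> : (const_mx 1 : 'rV_(n+1)) *m ctmx (Jn C n) = 0.
  by rewrite -(ctmx_const1 C (n+1) 1) -ctmxM Jn_one ctmx0.
by rewrite !mul0mx mxE.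
Qed.

Definition nrm (C : numClosedFieldType) m p (U : 'M[C]_(m, p)) : C := \tr (ctmx U *m U).

Lemma nrmE (C : numClosedFieldType) m p (U : 'M[C]_(m, p)) :
  nrm U = \sum_j \sum_i `|U i j| ^+ 2.
Proof.
rewrite /nrm /mxtrace; apply: eq_bigr => j _; rewrite mxE.
by apply: eq_bigr => i _; rewrite ctmxE normCKC.
Qed.

Lemma nrm_ge0 (C : numClosedFieldType) m p (U : 'M[C]_(m, p)) : 0 <= nrm U.
Proof. by rewrite nrmE; apply: sumr_ge0 => j _; apply: sumr_ge0 => i _; apply: exprn_ge0. Qed.

Lemma sum_ge_term (C : numClosedFieldType) (I : finType) (F : I -> C) i :
  (forall j, 0 <= F j) -> F i <= \sum_j F j.
Proof.
move=> h; rewrite (bigD1 i) //= lerDl; exact: sumr_ge0.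
Qed.

Lemma nrm_entry (C : numClosedFieldType) m p (U : 'M[C]_(m, p)) i j :
  `|U i j| ^+ 2 <= nrm U.
Proof.
rewrite nrmE; apply: (@le_trans _ _ (\sum_i `|U i j| ^+ 2)).
  have := @sum_ge_term C _ (fun i => `|U i j| ^+ 2) i; apply=> l; exact: exprn_ge0.
have := @sum_ge_term C _ (fun j => \sum_i `|U i j| ^+ 2) j; apply.
by move=> l; apply: sumr_ge0 => l' _; apply: exprn_ge0.
Qed.

Lemma nrm_eq0 (C : numClosedFieldType) m p (U : 'M[C]_(m, p)) : nrm U = 0 -> U = 0.
Proof.
move=> h; apply/matrixP=> i j; rewrite mxE.
have := nrm_entry U i j; rewrite h => h2.
have : `|U i j| ^+ 2 = 0 by apply/eqP; rewrite eq_le h2 exprn_ge0.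
by move/eqP; rewrite expf_eq0 /= normr_eq0 => /eqP.
Qed.

Lemma ctmxZ (C : numClosedFieldType) m n (c : C) (A : 'M[C]_(m, n)) :
  ctmx (c *: A) = c^* *: ctmx A.
Proof. by apply/matrixP=> i j; rewrite /ctmx !mxE rmorphM. Qed.

Lemma key_bound (C : numClosedFieldType) n p (M : 'M[C]_n) (d : C) (U : 'M[C]_(n, p)) :
  0 < d ->
  d ^+ 2 * nrm U <= nrm ((ctmx M *m M + d%:M) *m U).
Proof.
move=> hd; set A := ctmx M *m M.
have hA : ctmx A = A by rewrite /A ctmxM ctmxK.
have hdc : d^* = d by rewrite geC0_conj // ltW.
rewrite mulmxDl mul_scalar_mx /nrm ctmxD ctmxZ hdc mulmxDl !mulmxDr.
rewrite !mxtraceD -!scalemxAl -!scalemxAr !mxtraceZ (ctmxM A U) hA.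
have e1 : \tr (ctmx U *m A *m U) = nrm (M *m U).
  by rewrite /nrm ctmxM /A !mulmxA.
have e2 : \tr (ctmx U *m (A *m U)) = nrm (M *m U) by rewrite mulmxA e1.
have e3 : \tr (ctmx U *m U) = nrm U by [].
have e4 : \tr (ctmx U *m A *m (A *m U)) = nrm (A *m U) by rewrite /nrm ctmxM hA mulmxA.
rewrite e1 e2 e3 e4 mulrA -expr2 addrA lerDr.
have hn := nrm_ge0 (M *m U); have hn2 := nrm_ge0 (A *m U); have hd0 := ltW hd.
by rewrite !addr_ge0 // mulr_ge0.
Qed.

Lemma unit_pd (C : numClosedFieldType) n (M : 'M[C]_n) (d : C) :
  0 < d -> ctmx M *m M + d%:M \in unitmx.
Proof.
move=> hd; set N := ctmx M *m M + d%:M.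
have hN : ctmx N = N.
  by rewrite /N ctmxD ctmx_scalar ctmxM ctmxK geC0_conj // ltW.
rewrite -row_free_unit -kermx_eq0; apply/eqP.
set V := kermx N.
have hV : V *m N = 0 by rewrite mulmx_ker.
have h0 : N *m ctmx V = 0 by rewrite -hN -ctmxM hV ctmx0.
have := key_bound M (ctmx V) hd; rewrite -/N h0.
have -> : nrm (0 : 'M[C]_(n, n)) = 0 by rewrite /nrm ctmx0 mul0mx mxtrace0.
move=> hle.
have hz : nrm (ctmx V) = 0.
  apply/eqP; rewrite eq_le nrm_ge0 andbT.
  by rewrite -(@ler_pM2l _ (d ^+ 2)) ?exprn_gt0 // mulr0.
by rewrite -(ctmxK V) (nrm_eq0 hz) ctmx0.
Qed.

Lemma circ_main (C : numClosedFieldType) (n : nat) (X k : 'M[C]_n)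
  (hk : k \in unitmx) (hK : Kn C n = k *m ctmx k) (Y : 'M[C]_n) :
  is_MP (ctmx k *m X *m k) Y ->
  is_circMP X (ctmx (invmx k) *m Y *m invmx k).
Proof.
set M := ctmx k *m X *m k => -[m1 m2 m3 m4].
set Ki := invmx k; set Ks := ctmx k; set Kis := ctmx Ki.
have e1 : k *m Ki = 1%:M by rewrite mulmxV.
have e2 : Ki *m k = 1%:M by rewrite mulVmx.
have e3 : Ks *m Kis = 1%:M by rewrite /Ks /Kis -ctmxM e2 ctmx1.
have e4 : Kis *m Ks = 1%:M by rewrite /Ks /Kis -ctmxM e1 ctmx1.
have hX : X = Kis *m M *m Ki.
  by rewrite /M !mulmxA e4 mul1mx -mulmxA e1 mulmx1.
rewrite /is_circMP /circ hK -/Ks.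
have hKs : ctmx Ks = k by rewrite ctmxK.
have hKis : ctmx Kis = Ki by rewrite ctmxK.
have hKi : ctmx Ki = Kis by [].
clearbody M; rewrite hX; clearbody Ks Kis Ki.
split.
- rewrite !mulmxA !(asc2 e2, asc2 e3, asc2 e1, asc2 e4) !mulmx1.
  by rewrite (asc3 m1).
- rewrite !mulmxA !(asc2 e2, asc2 e3, asc2 e1, asc2 e4) !mulmx1.
  by rewrite (asc3 m2).
- rewrite !mulmxA !(asc2 e2, asc2 e3, asc2 e1, asc2 e4) !mulmx1.
  by rewrite -(mulmxA Kis M Y) ctmxM ctmxM m3 hKis hKi !mulmxA.
- rewrite !mulmxA !(asc2 e2, asc2 e3, asc2 e1, asc2 e4) !mulmx1.
  by rewrite -(mulmxA Kis Y M) ctmxM ctmxM m4 hKis hKi !mulmxA.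
Qed.

Lemma le_1sq (C : numClosedFieldType) (x : C) : 0 <= x -> x <= 1 + x ^+ 2.
Proof.
move=> hx; case: (real_leP (ger0_real hx) (@real1 _)) => h.
  by apply: le_trans h _; rewrite lerDl exprn_ge0.
apply: (@le_trans _ _ (x ^+ 2)); last by rewrite lerDr.
by rewrite expr2 ler_peMr // ltW.
Qed.

Lemma entry_bound (C : numClosedFieldType) n (P T U : 'M[C]_n) (d B : C) i j :
  0 < d -> (forall l, `|d * U l j| <= B) ->
  `|d ^+ 2 * (P *m U) i j - d * T i j| <= d * (`|T i j| + B * \sum_l `|P i l|).
Proof.
move=> hd hB; apply: le_trans (ler_normB _ _) _.
rewrite mulrDr addrC lerD //.
  by rewrite (normrM d) ger0_norm // ltW.
rewrite mxE expr2 -mulrA (normrM d) (ger0_norm (ltW hd)).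
rewrite ler_pM2l // mulr_sumr; apply: le_trans (ler_norm_sum _ _ _) _.
rewrite mulr_sumr; apply: ler_sum => l _.
rewrite mulrCA (normrM (P i l)) mulrC ler_wpM2r //.
Qed.

Lemma zcancel (V : zmodType) (x a b : V) : x - a + b - x = b - a.
Proof. by rewrite addrAC (addrAC x) subrr add0r addrC. Qed.

Lemma entry_lin (C : numClosedFieldType) m p (A T P : 'M[C]_(m, p)) d i j :
  (A - d *: T + d ^+ 2 *: P) i j - A i j = d ^+ 2 * P i j - d * T i j.
Proof. by rewrite !mxE zcancel. Qed.

Lemma lim_main (C : numClosedFieldType) (n : nat) (X k : 'M[C]_n)
  (hk : k \in unitmx) (hK : Kn C n = k *m ctmx k) (Y : 'M[C]_n) :
  is_MP (ctmx k *m X *m k) Y ->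
  (forall delta : C, 0 < delta ->
         ctmx X *m Kn C n *m X *m Kn C n + delta%:M \in unitmx) /\
  mx_lim0 (fun delta : C =>
          invmx (ctmx X *m Kn C n *m X *m Kn C n + delta%:M) *m ctmx X)
     (ctmx (invmx k) *m Y *m invmx k).
Proof.
set M := ctmx k *m X *m k => -[m1 m2 m3 m4].
set Ki := invmx k; set Ks := ctmx k; set Kis := ctmx Ki.
have e1 : k *m Ki = 1%:M by rewrite mulmxV.
have e2 : Ki *m k = 1%:M by rewrite mulVmx.
have e3 : Ks *m Kis = 1%:M by rewrite /Ks /Kis -ctmxM e2 ctmx1.
have e4 : Kis *m Ks = 1%:M by rewrite /Ks /Kis -ctmxM e1 ctmx1.
have hX : X = Kis *m M *m Ki.
  by rewrite /M !mulmxA e4 mul1mx -mulmxA e1 mulmx1.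
rewrite hK -/Ks.
have hKis : ctmx Kis = Ki by rewrite ctmxK.
have hKi : ctmx Ki = Kis by [].
have [uKis uKs] := mulmx1_unit e4.
clearbody M; rewrite hX; clearbody Ks Kis Ki.
have hcX : ctmx (Kis *m M *m Ki) = Kis *m ctmx M *m Ki.
  by rewrite !ctmxM hKi hKis mulmxA.
have hG : forall d : C, ctmx (Kis *m M *m Ki) *m (k *m Ks) *m (Kis *m M *m Ki) *m (k *m Ks)
    + d%:M = Kis *m (ctmx M *m M + d%:M) *m Ks.
  move=> d; rewrite hcX mulmxDr mulmxDl; congr (_ + _).
    by rewrite !mulmxA !(asc2 e2, asc2 e3) !mulmx1.
  by rewrite scalar_mxC -mulmxA e4 mulmx1.
split.
  by move=> d hd; rewrite hG !unitmx_mul uKis uKs unit_pd.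
have hAY : ctmx M *m M *m Y = ctmx M.
  by rewrite -mulmxA -m3 -ctmxM m1.
set Z := Y *m ctmx Y *m Y.
have hAZ : ctmx M *m M *m Z = Y.
  by rewrite /Z !mulmxA hAY -ctmxM m4 m2.
set W := Z *m Ki; set T := Kis *m W; set B := 1 + nrm W.
set K := \sum_i \sum_j `|T i j| + B * \sum_i \sum_l `|Kis i l|.
have hB0 : 0 <= B by rewrite addr_ge0 ?ler01 ?nrm_ge0.
have hK0 : 0 <= K.
  rewrite addr_ge0 ?mulr_ge0 //; apply: sumr_ge0 => i _; apply: sumr_ge0 => j _;
  exact: normr_ge0.
have hK1 : 0 < K + 1 by apply: ltr_wpDl hK0 ltr01.
move=> eps heps; exists (eps / (K + 1)); first by rewrite divr_gt0.
move=> d hd hdd i j.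
set N := ctmx M *m M + d%:M.
have hNu : N \in unitmx by apply: unit_pd.
set U := invmx N *m W.
have hNU : N *m U = W by rewrite /U mulmxA mulmxV // mul1mx.
set V := Y *m Ki - d *: W + d ^+ 2 *: U.
have hNY : N *m (Y *m Ki) = ctmx M *m Ki + d *: (Y *m Ki).
  by rewrite mulmxA /N mulmxDl mul_scalar_mx hAY mulmxDl -scalemxAl.
have hNW : N *m W = Y *m Ki + d *: W.
  by rewrite /W mulmxA /N mulmxDl mul_scalar_mx hAZ mulmxDl -scalemxAl.
have hNV : N *m V = ctmx M *m Ki.
  rewrite /V mulmxDr mulmxBr -!scalemxAr hNY hNW hNU scalerDr scalerA -expr2.
  by rewrite opprD !addrA addrK addrNK.
set Xo := Kis *m Y *m Ki; set PU := Kis *m U.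
have hf : invmx (Kis *m N *m Ks) *m (Kis *m ctmx M *m Ki) = Xo - d *: T + d ^+ 2 *: PU.
  have -> : Xo - d *: T + d ^+ 2 *: PU = Kis *m V.
    by rewrite /V !mulmxDr mulmxN -!scalemxAr /Xo /T /PU !mulmxA.
  have -> : Kis *m ctmx M *m Ki = Kis *m N *m Ks *m (Kis *m V).
    by rewrite !mulmxA (asc2 e3) mulmx1 -!mulmxA hNV mulmxA.
  by rewrite (mulmxA (invmx _)) mulVmx ?mul1mx // !unitmx_mul uKis uKs hNu.
rewrite /= hG hcX -/N hf entry_lin /PU.
apply: le_lt_trans (@entry_bound C n Kis T U d B i j hd _) _.
  move=> l; apply: le_trans (le_1sq (normr_ge0 (d * U l j))) _; rewrite /B lerD2l.
  rewrite normrM exprMn (ger0_norm (ltW hd)).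
  rewrite -hNU; apply: le_trans (key_bound M U hd).
  by apply: ler_wpM2l; [apply: exprn_ge0; apply: ltW | apply: nrm_entry].
apply: (@le_lt_trans _ _ (d * (K + 1))).
  apply: ler_wpM2l; first exact: ltW.
  apply: le_trans (_ : K <= K + 1); last by rewrite lerDl.
  apply: lerD.
    apply: (@le_trans _ _ (\sum_j `|T i j|)).
      by have := @sum_ge_term C _ (fun j => `|T i j|) j; apply=> l.
    by have := @sum_ge_term C _ (fun i => \sum_j `|T i j|) i; apply=> l; apply: sumr_ge0.
  apply: ler_wpM2l => //.
  by have := @sum_ge_term C _ (fun i => \sum_l `|Kis i l|) i; apply=> l; apply: sumr_ge0.
by rewrite -ltr_pdivlMr.
Qed.

Theorem theorem6 (C : numClosedFieldType) (n : nat) (X k : 'M[C]_n)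
  (hk : k \in unitmx) (hK : Kn C n = k *m ctmx k) :
  forall Y : 'M[C]_n, is_MP (ctmx k *m X *m k) Y ->
  let Xo := ctmx (invmx k) *m Y *m invmx k in
  [/\ is_circMP X Xo,
      is_MP (phi X) (phi Xo),
      in_S (phi Xo),
      (forall delta : C, 0 < delta ->
         ctmx X *m Kn C n *m X *m Kn C n + delta%:M \in unitmx)
    & exists2 L : 'M[C]_n,
        mx_lim0 (fun delta : C =>
          invmx (ctmx X *m Kn C n *m X *m Kn C n + delta%:M) *m ctmx X) L &
        is_MP (phi X) (phi L)].
Proof.
move=> Y hY Xo.
have hc := circ_main hk hK hY.
have hmp := circMP_MP hc.
have [hu hl] := lim_main hk hK hY.
split => //; first exact: in_S_phi.
by exists Xo.
Qed.
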